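(* Let $f:\Omega_D\to\mathbb{O}$ be a slice function induced by the stem function $(F_1,F_2):D\to\mathbb{O}^2$, let $p=\alpha+I\beta\in\Omega_D$ with $\alpha,\beta\in\mathbb{R}$, $I\in\mathbb S$, and let $w=(\alpha,\beta)\in D$. Put $\gamma=F_1(w)$, $\delta=F_2(w)$, $q=f(p)=\gamma+I\delta$, and define the slice functions $g_1=(f\cdot\overline\gamma)\cdot\big((-\gamma(\overline qI))I\big)$ and $g_2=(f\cdot\overline\delta)\cdot(\delta\overline q)$. Then $g_1(p)=|\gamma|^2|q|^2$ and $g_2(p)=|\delta|^2|q|^2$.
   Context: Octonions $\mathbb{O}=\mathbb{H}+\ell\mathbb{H}$ (product $(a+\ell b)(c+\ell d)=(ac-d\bar b)+\ell(\bar a d+cb)$, conjugation $\overline{a+\ell b}=\bar a-\ell b$), identified with $\mathbb{R}^8$ with norm $|\cdot|$; $\mathbb S=\{I:I^2=-1\}$. $D\subset\mathbb{R}^2$ non-empty open, invariant under $(\alpha,\beta)\mapsto(\alpha,-\beta)$, $\Omega_D=\{\alpha+\beta I:(\alpha,\beta)\in D,I\in\mathbb S\}$, assumed connected. A slice function is $f(\alpha+\beta I)=F_1(\alpha,\beta)+IF_2(\alpha,\beta)$ for a stem function $(F_1,F_2):D\to\mathbb{O}^2$ ($F_1$ even, $F_2$ odd in $\beta$). The slice product of a slice function $f$ induced by $(F_1,F_2)$ with a constant $c\in\mathbb{O}$ (on the right) is the slice function $f\cdot c$ induced by the stem function $(F_1c,F_2c)$. *)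

(* Defs.v *)
From HB Require Import structures.
From mathcomp Require Import all_boot all_order all_algebra.
From mathcomp Require Import all_classical all_reals all_analysis.
Set Implicit Arguments. Unset Strict Implicit. Unset Printing Implicit Defensive.
Import Order.TTheory GRing.Theory Num.Theory.
Import numFieldNormedType.Exports.
Local Open Scope ring_scope.
Local Open Scope classical_set_scope.

Section Oct.
Variable R : realType.

Record quat := Quat { qre : R; qi : R; qj : R; qk : R }.

Definition qadd (a b : quat) : quat :=
  Quat (qre a + qre b) (qi a + qi b) (qj a + qj b) (qk a + qk b).
Definition qopp (a : quat) : quat := Quat (- qre a) (- qi a) (- qj a) (- qk a).
Definition qconj (a : quat) : quat := Quat (qre a) (- qi a) (- qj a) (- qk a).
Definition qmul (a b : quat) : quat :=
  Quat (qre a * qre b - qi a * qi b - qj a * qj b - qk a * qk b)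
       (qre a * qi b + qi a * qre b + qj a * qk b - qk a * qj b)
       (qre a * qj b - qi a * qk b + qj a * qre b + qk a * qi b)
       (qre a * qk b + qi a * qj b - qj a * qi b + qk a * qre b).

(** Octonions O = H + l H, the pair (a, b) standing for a + l b. *)
Record oct := Oct { ofst : quat; osnd : quat }.

Definition oadd (x y : oct) : oct := Oct (qadd (ofst x) (ofst y)) (qadd (osnd x) (osnd y)).
Definition oopp (x : oct) : oct := Oct (qopp (ofst x)) (qopp (osnd x)).
Definition omul (x y : oct) : oct :=
  let a := ofst x in let b := osnd x in let c := ofst y in let d := osnd y in
  Oct (qadd (qmul a c) (qopp (qmul d (qconj b))))
      (qadd (qmul (qconj a) d) (qmul c b)).
Definition oconj (x : oct) : oct := Oct (qconj (ofst x)) (qopp (osnd x)).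

Definition oreal (r : R) : oct := Oct (Quat r 0 0 0) (Quat 0 0 0 0).

Definition oct_coords (x : oct) : seq R :=
  [:: qre (ofst x); qi (ofst x); qj (ofst x); qk (ofst x);
      qre (osnd x); qi (osnd x); qj (osnd x); qk (osnd x)].
Definition oct_to_rV (x : oct) : 'rV[R]_8 := \row_(i < 8) nth 0 (oct_coords x) i.

Definition onorm (x : oct) : R := Num.sqrt (\sum_(c <- oct_coords x) c ^+ 2).

Definition imag_units : set oct := [set I | omul I I = oreal (-1)].

Definition opoint (a b : R) (I : oct) : oct := oadd (oreal a) (omul (oreal b) I).

Definition OmegaD (D : set (R * R)) : set oct :=
  [set x | exists a b I, D (a, b) /\ imag_units I /\ x = opoint a b I].

Definition admissible_domain (D : set (R * R)) : Prop :=
  [/\ open D, D !=set0,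
      (forall a b, D (a, b) -> D (a, - b)) &
      connected (oct_to_rV @` OmegaD D)].

Definition stem_function (D : set (R * R)) (F1 F2 : R * R -> oct) : Prop :=
  forall a b, D (a, b) -> F1 (a, - b) = F1 (a, b) /\ F2 (a, - b) = oopp (F2 (a, b)).

Definition induced_by (D : set (R * R)) (F1 F2 : R * R -> oct) (f : oct -> oct) : Prop :=
  forall a b I, D (a, b) -> imag_units I ->
    f (opoint a b I) = oadd (F1 (a, b)) (omul I (F2 (a, b))).

End Oct.

(* Main.v *)
Require Import Defs.
From HB Require Import structures.
From mathcomp Require Import all_boot all_order all_algebra.
From mathcomp Require Import all_classical all_reals all_analysis.
From mathcomp Require Import ring lra.
Import Order.TTheory GRing.Theory Num.Theory.
Import numFieldNormedType.Exports.
Local Open Scope ring_scope.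
Local Open Scope classical_set_scope.

Section H.
Variable R : realType.
Local Notation oct := (oct R).

Definition n2 (x : oct) : R :=
  qre (ofst x) ^+ 2 + qi (ofst x) ^+ 2 + qj (ofst x) ^+ 2 + qk (ofst x) ^+ 2 +
  qre (osnd x) ^+ 2 + qi (osnd x) ^+ 2 + qj (osnd x) ^+ 2 + qk (osnd x) ^+ 2.
Definition imJ (j1 j2 j3 j4 j5 j6 j7 : R) : oct :=
  Oct (Quat 0 j1 j2 j3) (Quat j4 j5 j6 j7).
Definition nJ (j1 j2 j3 j4 j5 j6 j7 : R) : R :=
  j1^+2 + j2^+2 + j3^+2 + j4^+2 + j5^+2 + j6^+2 + j7^+2.
Definition reJ (J z : oct) : R := qre (ofst (omul J z)).

Ltac octd := repeat match goal with x : oct |- _ =>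
  let a := fresh "a" in let b := fresh "a" in let c := fresh "a" in let d := fresh "a" in
  let e := fresh "a" in let f := fresh "a" in let g := fresh "a" in let h := fresh "a" in
  destruct x as [[a b c d] [e f g h]] end.
Ltac octcbv := cbv beta iota zeta delta [omul oadd oopp oconj oreal qmul qadd qopp qconj
  imJ nJ n2 reJ ofst osnd qre qi qj qk].
Ltac octring := octd; octcbv; f_equal; f_equal; ring.
Ltac scring := octd; octcbv; ring.

Lemma U1 (j1 j2 j3 j4 j5 j6 j7 : R) (J : oct) (hJ : J = imJ j1 j2 j3 j4 j5 j6 j7) (g d : oct) :
  omul (oconj (oadd g (omul J d))) J = oadd (omul (oconj g) J) (omul (oreal (nJ j1 j2 j3 j4 j5 j6 j7)) (oconj d)).
Proof. (subst J; octring). Qed.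

Lemma W1 (j1 j2 j3 j4 j5 j6 j7 : R) (J : oct) (hJ : J = imJ j1 j2 j3 j4 j5 j6 j7) (a : R) (y : oct) :
  omul (oopp (oadd (omul (oreal a) J) y)) J = oadd (oreal ((nJ j1 j2 j3 j4 j5 j6 j7) * a)) (oopp (omul y J)).
Proof. (subst J; octring). Qed.

Lemma C2 (j1 j2 j3 j4 j5 j6 j7 : R) (J : oct) (hJ : J = imJ j1 j2 j3 j4 j5 j6 j7) (g d : oct) :
  omul d (oconj (oadd g (omul J d))) = oadd (omul d (oconj g)) (oopp (omul (oreal (n2 d)) J)).
Proof. (subst J; octring). Qed.

Lemma Final1 (j1 j2 j3 j4 j5 j6 j7 : R) (J : oct) (hJ : J = imJ j1 j2 j3 j4 j5 j6 j7) (a : R) (z : oct) :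
  oadd (omul (oreal a) (oadd (oreal a) (oopp (omul (oconj z) J))))
       (omul J (omul z (oadd (oreal a) (oopp (omul (oconj z) J))))) =
  oreal (a * a + (nJ j1 j2 j3 j4 j5 j6 j7) * n2 z + 2 * a * reJ J z).
Proof. (subst J; octring). Qed.

Lemma Final2 (j1 j2 j3 j4 j5 j6 j7 : R) (J : oct) (hJ : J = imJ j1 j2 j3 j4 j5 j6 j7) (b : R) (z : oct) :
  oadd (omul (oconj z) (oadd z (oopp (omul (oreal b) J))))
       (omul J (omul (oreal b) (oadd z (oopp (omul (oreal b) J))))) =
  oreal (n2 z + (nJ j1 j2 j3 j4 j5 j6 j7) * b * b + 2 * b * reJ J z).
Proof. (subst J; octring). Qed.

Lemma N2q (j1 j2 j3 j4 j5 j6 j7 : R) (J : oct) (hJ : J = imJ j1 j2 j3 j4 j5 j6 j7) (g d : oct) :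
  n2 (oadd g (omul J d)) = n2 g + (nJ j1 j2 j3 j4 j5 j6 j7) * n2 d + 2 * reJ J (omul d (oconj g)).
Proof. (subst J; scring). Qed.

Lemma V1 (g d J : oct) :
  omul g (oadd (omul (oconj g) J) (oconj d)) = oadd (omul (oreal (n2 g)) J) (omul g (oconj d)).
Proof. octring. Qed.

Lemma mul1o (x : oct) : omul (oreal 1) x = x.
Proof. octring. Qed.

Lemma conjz (g d : oct) : omul g (oconj d) = oconj (omul d (oconj g)).
Proof. octring. Qed.

Lemma mulconj (x : oct) : omul x (oconj x) = oreal (n2 x).
Proof. octring. Qed.

Lemma N2M (d g : oct) : n2 (omul d (oconj g)) = n2 d * n2 g.
Proof. scring. Qed.

Lemma onorm2 (x : oct) : onorm x ^+ 2 = n2 x.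
Proof.
rewrite /onorm sqr_sqrtr; last first.
  by rewrite big_seq; apply: sumr_ge0 => c _; rewrite sqr_ge0.
by rewrite /oct_coords !big_cons big_nil /n2 addr0 !addrA.
Qed.

Lemma imag_decomp (I : oct) : omul I I = oreal (-1) ->
  exists j1 j2 j3 j4 j5 j6 j7, I = imJ j1 j2 j3 j4 j5 j6 j7 /\ nJ j1 j2 j3 j4 j5 j6 j7 = 1.
Proof.
case: I => [[i0 i1 i2 i3] [i4 i5 i6 i7]] H.
move: H; octcbv => -[] e0 e1 e2 e3 e4 e5 e6 e7.
have f0 := congr1 (fun x => 2 * i0 * x) e0.
have f1 := congr1 (fun x => i1 * x) e1.
have f2 := congr1 (fun x => i2 * x) e2.
have f3 := congr1 (fun x => i3 * x) e3.
have f4 := congr1 (fun x => i4 * x) e4.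
have f5 := congr1 (fun x => i5 * x) e5.
have f6 := congr1 (fun x => i6 * x) e6.
have f7 := congr1 (fun x => i7 * x) e7.
cbv beta in f0, f1, f2, f3, f4, f5, f6, f7.
have h : i0 * (i0 ^+ 2 + 1) = 0 by lra.
have hi0 : i0 = 0.
  move/eqP: h; rewrite mulf_eq0 => /orP[/eqP //|].
  by rewrite gt_eqF // ltr_pwDr // sqr_ge0.
subst i0; exists i1, i2, i3, i4, i5, i6, i7; split => //; lra.
Qed.
End H.

Theorem lemma3p10 (R : realType) (D : set (R * R)) (F1 F2 : R * R -> oct R)
  (f g1 g2 : oct R -> oct R) (alpha beta : R) (I : oct R) :
  admissible_domain D ->
  stem_function D F1 F2 ->
  induced_by D F1 F2 f ->
  D (alpha, beta) -> imag_units I ->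
  let w := (alpha, beta) in
  let p := opoint alpha beta I in
  let gamma := F1 w in
  let delta := F2 w in
  let q := f p in
  let c1 := omul (oopp (omul gamma (omul (oconj q) I))) I in
  let c2 := omul delta (oconj q) in
  (* g1 = (f . conj gamma) . c1 : induced by ((F1 conj gamma) c1, (F2 conj gamma) c1) *)
  induced_by D (fun v => omul (omul (F1 v) (oconj gamma)) c1)
               (fun v => omul (omul (F2 v) (oconj gamma)) c1) g1 ->
  (* g2 = (f . conj delta) . c2 *)
  induced_by D (fun v => omul (omul (F1 v) (oconj delta)) c2)
               (fun v => omul (omul (F2 v) (oconj delta)) c2) g2 ->
  g1 p = oreal (onorm gamma ^+ 2 * onorm q ^+ 2) /\
  g2 p = oreal (onorm delta ^+ 2 * onorm q ^+ 2).
Proof.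
move=> _ _ hf Dw hI w p gamma delta q c1 c2 hg1 hg2.
have [j1 [j2 [j3 [j4 [j5 [j6 [j7 [hJ hN]]]]]]]] := @imag_decomp _ _ hI.
have hq : q = oadd gamma (omul I delta) := hf alpha beta I Dw hI.
have e1 := hg1 alpha beta I Dw hI.
have e2 := hg2 alpha beta I Dw hI.
rewrite -/w -/p -/gamma -/delta in e1 e2.
split.
  rewrite e1 mulconj /c1 hq (@U1 _ _ _ _ _ _ _ _ _ hJ) hN mul1o V1 (@W1 _ _ _ _ _ _ _ _ _ hJ) hN mul1r.
  rewrite (@conjz _ gamma delta) (@Final1 _ _ _ _ _ _ _ _ _ hJ) hN !onorm2 (@N2q _ _ _ _ _ _ _ _ _ hJ) hN N2M.
  by f_equal; ring.
rewrite e2 (@conjz _ gamma delta) (@mulconj _ delta) /c2 hq (@C2 _ _ _ _ _ _ _ _ _ hJ).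
rewrite (@Final2 _ _ _ _ _ _ _ _ _ hJ) hN !onorm2 (@N2q _ _ _ _ _ _ _ _ _ hJ) hN N2M.
by f_equal; ring.
Qed.
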